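(* Let $(S,\mathcal{E})$ be a qualitative evidence frame and let $\mathfrak{F}$ be a set of evidence allocation functions on $(S,\mathcal{E})$. Define $i:2^{\mathcal{E}}\to\tau_{\mathcal{E}}$ by $i(\mathbf{E})=\bigcap\mathbf{E}$ if $\mathbf{E}\neq\emptyset$ and $i(\emptyset)=S$. Then $\mathfrak{F}\cup\{i\}$ is a set of evidence allocation functions on $(S,\mathcal{E})$.
   Context: A qualitative evidence frame is a pair $(S,\mathcal{E})$ where $S$ is a finite nonempty set (of possible states) and $\mathcal{E}$ is a nonempty family of subsets of $S$ with $\emptyset\notin\mathcal{E}$ and $S\notin\mathcal{E}$. For any family $\mathbf{E}\subseteq 2^S$, $\tau_{\mathbf{E}}$ denotes the topology on $S$ generated by $\mathbf{E}$ (as a subbasis): it consists of $\emptyset$, $S$, all finite intersections of members of $\mathbf{E}$, and all arbitrary unions of such finite intersections. For $\mathbf{E}\subseteq\mathcal{E}$, an element $D\in\tau_{\mathbf{E}}$ is called dense in $\bigcup\mathbf{E}$ w.r.t. $\tau_{\mathbf{E}}$ if $D\cap T\neq\emptyset$ for every nonempty $T\in\tau_{\mathbf{E}}$. A set of evidence allocation functions on $(S,\mathcal{E})$ is a set $\mathfrak{F}$ of functions $2^{\mathcal{E}}\to\tau_{\mathcal{E}}$ such that for all $f,g\in\mathfrak{F}$: (1) $f(\emptyset)=S$; (2) for every nonempty $\mathbf{E}\subseteq\mathcal{E}$, either $f(\mathbf{E})=\emptyset$, or $f(\mathbf{E})\in\tau_{\mathbf{E}}$ and $f(\mathbf{E})$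 is dense in $\bigcup\mathbf{E}$ w.r.t. $\tau_{\mathbf{E}}$; (3) for every $\mathbf{E}\subseteq\mathcal{E}$, $f(\mathbf{E})\subseteq g(\mathbf{E})$ or $g(\mathbf{E})\subseteq f(\mathbf{E})$. *)

(* Defs.v *)
From mathcomp Require Import all_boot.
Set Implicit Arguments. Unset Strict Implicit. Unset Printing Implicit Defensive.

Section Defs.
Variable S : finType.

Definition evidence_frame (E : {set {set S}}) : Prop :=
  0 < #|S| /\ E != set0 /\ set0 \notin E /\ [set: S] \notin E.

(* finite intersections of members of F (the empty intersection is S) *)
Definition fin_inter (F : {set {set S}}) (U : {set S}) : Prop :=
  exists H : {set {set S}}, H \subset F /\ U = \bigcap_(A in H) A.

(* tau_F : the topology on S generated by F as a subbasis: arbitrary unions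
   (finite, since S is finite) of finite intersections of members of F;
   contains set0 (empty union) and S (empty intersection). *)
Definition tau (F : {set {set S}}) (U : {set S}) : Prop :=
  exists B : {set {set S}}, (forall G : {set S}, G \in B -> fin_inter F G) /\
    U = \bigcup_(G in B) G.

Definition dense_in (F : {set {set S}}) (D : {set S}) : Prop :=
  tau F D /\ forall T : {set S}, tau F T -> T != set0 -> D :&: T != set0.

(* A set of evidence allocation functions on (S, E): a predicate Fam on
   functions 2^E -> tau_E (represented as total functions on {set {set S}},
   of which only the values on subsets of E matter). *)
Definition evidence_allocation_set (E : {set {set S}})
    (Fam : ({set {set S}} -> {set S}) -> Prop) : Prop :=
  forall f g, Fam f -> Fam g ->
    (forall G : {set {set S}}, G \subset E -> tau E (f G)) /\
    f set0 = [set: S] /\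
    (forall G : {set {set S}}, G \subset E -> G != set0 ->
       f G = set0 \/ (tau G (f G) /\ dense_in G (f G))) /\
    (forall G : {set {set S}}, G \subset E -> f G \subset g G \/ g G \subset f G).

Definition inter_fun (G : {set {set S}}) : {set S} :=
  if G == set0 then [set: S] else \bigcap_(A in G) A.

End Defs.

(* Main.v *)
Require Import Defs.
From mathcomp Require Import all_boot.

Lemma tau_inter (S : finType) (G : {set {set S}}) (U : {set S}) :
  tau G U -> U = set0 \/ \bigcap_(A in G) A \subset U.
Proof.
case=> B [HB ->].
case: (set_0Vmem B) => [->|[G' HG']]; first by left; rewrite big_set0.
right; apply: subset_trans (bigcup_sup G' HG').
have [H [HH ->]] := HB G' HG'.
apply/bigcapsP => A HA; apply: bigcap_inf; exact: (subsetP HH).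
Qed.

Lemma inter_props (S : finType) (E : {set {set S}}) (G : {set {set S}}) :
  G \subset E ->
  tau E (inter_fun G) /\
  (G != set0 -> inter_fun G = set0 \/
     (tau G (inter_fun G) /\ dense_in G (inter_fun G))).
Proof.
move=> GE; rewrite /inter_fun.
case: eqP => [->|/eqP G0].
  split=> [|]; last by move=> /eqP.
  exists [set [set: S]]; split; last by rewrite big_set1.
  move=> X; rewrite inE => /eqP ->; exists set0; split; first exact: sub0set.
  by rewrite big_set0.
have tauI : forall F : {set {set S}}, G \subset F -> tau F (\bigcap_(A in G) A).
  move=> F GF; exists [set \bigcap_(A in G) A]; split; last by rewrite big_set1.
  by move=> X; rewrite inE => /eqP ->; exists G.
split; first exact: tauI.
move=> _.
case: (eqVneq (\bigcap_(A in G) A) set0) => [->|I0]; first by left.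
right; split; first exact: tauI.
split; first exact: tauI.
move=> T /tau_inter [->|sub]; first by rewrite eqxx.
by move=> _; rewrite (setIidPl sub).
Qed.

Lemma inter_cmp (S : finType) (E : {set {set S}}) (g : {set {set S}} -> {set S})
  (G : {set {set S}}) :
  G \subset E -> g set0 = [set: S] ->
  (G != set0 -> g G = set0 \/ (tau G (g G) /\ dense_in G (g G))) ->
  inter_fun G \subset g G \/ g G \subset inter_fun G.
Proof.
move=> GE g0 Hg; rewrite /inter_fun.
case: eqP => [->|/eqP G0]; first by rewrite g0; left.
case: (Hg G0) => [->|[/tau_inter [->|sub] _]].
- by right; exact: sub0set.
- by right; exact: sub0set.
- by left.
Qed.

Theorem proposition1 (S : finType) (E : {set {set S}})
    (Fam : ({set {set S}} -> {set S}) -> Prop) :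
  evidence_frame E ->
  evidence_allocation_set E Fam ->
  evidence_allocation_set E (fun f => Fam f \/ f = @inter_fun S).
Proof.
move=> _ HF f g Hf Hg.
have gprops : forall h, Fam h \/ h = @inter_fun S ->
  (forall G : {set {set S}}, G \subset E -> tau E (h G)) /\ h set0 = [set: S] /\
  (forall G : {set {set S}}, G \subset E -> G != set0 ->
     h G = set0 \/ (tau G (h G) /\ dense_in G (h G))).
  move=> h [Hh|->].
    by have [A [B [C _]]] := HF h h Hh Hh.
  split; first by move=> G GE; case: (@inter_props _ E G GE).
  split; first by rewrite /inter_fun eqxx.
  by move=> G GE; case: (@inter_props _ E G GE).
have [A [B C]] := gprops f Hf.
have [_ [Bg Cg]] := gprops g Hg.
split=> //; split=> //; split=> //.
move=> G GE.
case: Hf => [Hf|->]; case: Hg => [Hg|->].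
- by have [_ [_ [_ D]]] := HF f g Hf Hg; exact: D.
- by case: (@inter_cmp _ E _ G GE B (C G GE)) => ?; [right|left].
- exact: @inter_cmp _ E _ G GE Bg (Cg G GE).
- by left.
Qed.
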